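(* Let $X,Y\subseteq\mathbb{P}^n$ be real closed subschemes such that $X\cap Y=\operatorname{Span}(X)\cap\operatorname{Span}(Y)$. Let $f\in\mathbb{R}[X\cup Y]_2$ and suppose that the restrictions $f|_X\in\mathbb{R}[X]_2$ and $f|_Y\in\mathbb{R}[Y]_2$ are each a sum of at most $r$ squares of linear forms in $\mathbb{R}[X]$ and $\mathbb{R}[Y]$ respectively. Then $f$ is a sum of at most $r$ squares of linear forms in $\mathbb{R}[X\cup Y]$.
   Context: For a subscheme $Z\subseteq\mathbb{P}^n$ with homogeneous ideal $I(Z)\subseteq\mathbb{R}[x_0,\dots,x_n]$, $\mathbb{R}[Z]=\mathbb{R}[x_0,\dots,x_n]/I(Z)$; $X\cup Y$ is defined by $I(X)\cap I(Y)$, and restriction maps $\mathbb{R}[X\cup Y]\to\mathbb{R}[X]$, $\mathbb{R}[X\cup Y]\to\mathbb{R}[Y]$ are the natural quotient maps. $\operatorname{Span}(Z)$ is the smallest projective linear subspace containing $Z$. *)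

(* Defs.v *)
From HB Require Import structures.
From mathcomp Require Import all_boot all_order all_algebra.
Set Implicit Arguments. Unset Strict Implicit. Unset Printing Implicit Defensive.
Import Order.TTheory GRing.Theory Num.Theory.
Local Open Scope ring_scope.

Section MPoly.
Variable R : rcfType.

(* mpoly n = R[x_1, ..., x_n], built as iterated univariate polynomials:
   mpoly 0 = R, mpoly (k+1) = (mpoly k)[x_{k+1}]. *)
Fixpoint mpoly (n : nat) : comNzRingType :=
  match n with
  | 0%N => R
  | k.+1 => ({poly mpoly k} : comNzRingType)
  end.

(* homog n d f : f is homogeneous of total degree d (0 is homogeneous of
   every degree). *)
Fixpoint homog (n : nat) : nat -> mpoly n -> bool :=
  match n return nat -> mpoly n -> bool with
  | 0%N => fun d c => (d == 0%N) || (c == 0)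
  | k.+1 => fun d (p : {poly mpoly k}) =>
      [forall i : 'I_(size p),
         if (i <= d)%N then homog (d - i) p`_i else p`_i == 0]
  end.

Variable n : nat.
Local Notation S := (mpoly n).

Definition is_ideal (I : S -> Prop) : Prop :=
  [/\ I 0, (forall a b, I a -> I b -> I (a + b)) & (forall a b, I b -> I (a * b))].

Definition is_homog_ideal (I : S -> Prop) : Prop :=
  is_ideal I /\
  forall f, I f -> exists (N : nat) (g : nat -> S),
      f = \sum_(d < N) g d /\ forall d, (d < N)%N -> homog d (g d) /\ I (g d).

(* saturation (J : m^oo) with respect to the irrelevant ideal m = (x_1..x_n):
   f is in it iff m^k f is contained in J for some k, i.e. g f \in J for all
   forms g of degree k. *)
Definition saturation (J : S -> Prop) (f : S) : Prop :=
  exists k : nat, forall g, homog k g -> J (g * f).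

Definition is_saturated (J : S -> Prop) : Prop :=
  forall f, saturation J f -> J f.

(* ideal of a closed subscheme of P^(n-1): a saturated homogeneous ideal *)
Definition is_scheme_ideal (I : S -> Prop) : Prop :=
  is_homog_ideal I /\ is_saturated I.

Definition ideal_sum (I J : S -> Prop) (f : S) : Prop :=
  exists a b, [/\ I a, J b & f = a + b].

Definition ideal_gen (L : S -> Prop) (f : S) : Prop :=
  exists (m : nat) (a b : 'I_m -> S),
    (forall j, L (b j)) /\ f = \sum_(j < m) a j * b j.

(* ideal of Span(Z): generated by the linear forms in I(Z) *)
Definition span_ideal (I : S -> Prop) : S -> Prop :=
  ideal_gen (fun l => I l /\ homog 1 l).

(* ideal of Span(X) cap Span(Y) *)
Definition span_cap_ideal (I J : S -> Prop) : S -> Prop :=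
  ideal_gen (fun l => (I l \/ J l) /\ homog 1 l).

(* the class of q in R[Z] = S/I(Z) is a sum of at most r squares of
   linear forms of R[Z] *)
Definition sos_linear_mod (I : S -> Prop) (r : nat) (q : S) : Prop :=
  exists l : 'I_r -> S,
    (forall i, homog 1 (l i)) /\ I (q - \sum_(i < r) l i ^+ 2).

End MPoly.

(* Main.v *)
Require Import Defs.
From HB Require Import structures.
From mathcomp Require Import all_boot all_order all_algebra.
From mathcomp Require Import ring zify lra.
From Stdlib Require Import Classical.
Import Order.TTheory GRing.Theory Num.Theory.
Set Implicit Arguments. Unset Strict Implicit. Unset Printing Implicit Defensive.
Local Open Scope ring_scope.

Section S.
Variable R : rcfType.
Fixpoint ev (m : nat) (v : nat -> R) : {rmorphism mpoly R m -> R} :=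
  match m return {rmorphism mpoly R m -> R} with
  | 0%N => idfun
  | k.+1 => horner_morph (fun a => mulrC (v k) (ev k v a))
  end.
Lemma evS k v (p : mpoly R k.+1) : ev k.+1 v p = (map_poly (ev k v) p).[v k].
Proof. by []. Qed.
Fixpoint cst (m : nat) : {rmorphism R -> mpoly R m} :=
  match m return {rmorphism R -> mpoly R m} with
  | 0%N => idfun
  | k.+1 => (polyC \o cst k)%FUN
  end.
Lemma cstS k r : cst k.+1 r = (cst k r)%:P. Proof. by []. Qed.
Fixpoint xv (m : nat) : nat -> mpoly R m :=
  match m return nat -> mpoly R m with
  | 0%N => fun _ => 0
  | k.+1 => fun j => if j == k then 'X else (xv k j)%:P
  end.
Definition lin m (c : nat -> R) : mpoly R m := \sum_(j < m) cst m (c j) * xv m j.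

Lemma ev_cst m v r : ev m v (cst m r) = r.
Proof. elim: m => [//|k IH]; rewrite evS cstS map_polyC hornerC; exact: IH. Qed.

Lemma ev_xv m v j : (j < m)%N -> ev m v (xv m j) = v j.
Proof.
elim: m => [//|k IH] hj; rewrite evS /=.
case: eqP => [->|/eqP ne]; first by rewrite map_polyX hornerX.
rewrite map_polyC hornerC; apply: IH; by rewrite ltn_neqAle ne -ltnS.
Qed.

Lemma ev_lin m v c : ev m v (lin m c) = \sum_(j < m) c j * v j.
Proof.
rewrite /lin rmorph_sum; apply: eq_bigr => j _.
by rewrite rmorphM ev_cst ev_xv.
Qed.

Lemma linS k c : lin k.+1 c = (lin k c)%:P + (cst k (c k))%:P * 'X.
Proof.
rewrite /lin big_ord_recr /= eqxx; congr (_ + _).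
rewrite rmorph_sum; apply: eq_bigr => j _.
by rewrite (ltn_eqF (ltn_ord j)) rmorphM.
Qed.

Lemma homogS k d (p : mpoly R k.+1) :
  homog d p = [forall i : 'I_(size p), if (i <= d)%N then homog (d - i) p`_i else p`_i == 0].
Proof. by []. Qed.

Lemma homog0 m d : homog d (0 : mpoly R m).
Proof.
case: m => [|k] /=; first by rewrite eqxx orbT.
by apply/forallP => -[i]; rewrite size_poly0.
Qed.

Lemma homogSP k d (p : mpoly R k.+1) :
  homog d p <-> forall i, if (i <= d)%N then is_true (homog (d - i) p`_i) else p`_i = 0.
Proof.
rewrite homogS; split.
  move=> /forallP H i; case: (ltnP i (size p)) => hi.
    by have := H (Ordinal hi) => /=; case: ifP => // _ /eqP.
  by rewrite nth_default //; case: ifP => // _; apply: homog0.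
move=> H; apply/forallP => i; have := H i; case: ifP => // _ ->; exact: eqxx.
Qed.

Lemma homogC k d (c : mpoly R k) : homog d c -> homog d (c%:P : mpoly R k.+1).
Proof.
move=> hc; apply/homogSP => i; rewrite coefC.
case: i => [|i] /=; first by rewrite subn0.
by case: ifP => _ //; apply: homog0.
Qed.

Lemma homog_cst m r : homog 0 (cst m r).
Proof. elim: m => [//|k IH]; exact: homogC. Qed.

Lemma homog0_cst m (c : mpoly R m) : homog 0 c -> exists r, c = cst m r.
Proof.
elim: m c => [|k IH] c; first by exists c.
move/homogSP => H; have := H 0%N => /= /IH [r hr]; exists r.
rewrite /= -hr; apply/polyP => i; rewrite coefC.
by case: i => [|i] //=; have := H i.+1.
Qed.

Lemma homog_xpow m j e : (j < m)%N -> homog e (xv m j ^+ e).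
Proof.
elim: m => [//|k IH] hj.
have -> : xv k.+1 j = if j == k then 'X else (xv k j)%:P by [].
case: eqP => [_|/eqP ne].
  apply/homogSP => i; rewrite coefXn.
  case: (ltngtP i e) => [hie|hie|->].
  - exact: homog0.
  - by [].
  - by rewrite subnn -(rmorph1 (cst k)) homog_cst.
rewrite -rmorphXn; apply: homogC; apply: IH.
by rewrite ltn_neqAle ne -ltnS.
Qed.

Lemma lin_homog m c : homog 1 (lin m c).
Proof.
elim: m => [|k IH].
  have -> : lin 0 c = 0 by rewrite /lin big_ord0.
  exact: homog0.
rewrite linS; apply/homogSP => i.
rewrite coefD coefC coefMX coefC.
case: i => [|[|i]] /=; rewrite ?addr0 ?add0r //.
by rewrite homog_cst.
Qed.

Lemma homog1_lin m (l : mpoly R m) : homog 1 l -> exists c, l = lin m c.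
Proof.
elim: m l => [|k IH] l.
  by move=> /= /eqP ->; exists (fun _ => 0); rewrite /lin big_ord0.
move/homogSP => H.
have [c0 h0] : exists c0, l`_0 = lin k c0 by apply: IH; exact: (H 0%N).
have [r h1] : exists r, l`_1 = cst k r by apply: homog0_cst; exact: (H 1%N).
exists (fun j => if j == k then r else c0 j).
rewrite linS eqxx.
have -> : lin k (fun j => if j == k then r else c0 j) = lin k c0.
  by apply: eq_bigr => j _; rewrite (ltn_eqF (ltn_ord j)).
rewrite -h0 -h1; apply/polyP => i.
rewrite coefD coefC coefMX coefC.
case: i => [|[|i]] /=; rewrite ?addr0 ?add0r //.
by have := H i.+2.
Qed.

Lemma lin_sum m p (f : 'I_p -> nat -> R) :
  lin m (fun j => \sum_(i < p) f i j) = \sum_(i < p) lin m (f i).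
Proof.
rewrite /lin exchange_big /=; apply: eq_bigr => j _.
by rewrite rmorph_sum mulr_suml.
Qed.

Lemma lin_add m c d : lin m (fun j => c j + d j) = lin m c + lin m d.
Proof. by rewrite /lin -big_split /=; apply: eq_bigr => j _; rewrite rmorphD mulrDl. Qed.

Lemma lin_opp m c : lin m (fun j => - c j) = - lin m c.
Proof. by rewrite /lin -sumrN; apply: eq_bigr => j _; rewrite rmorphN mulNr. Qed.

Lemma lin_scale m a c : lin m (fun j => a * c j) = cst m a * lin m c.
Proof. by rewrite /lin mulr_sumr; apply: eq_bigr => j _; rewrite rmorphM mulrA. Qed.
End S.
Section LA.
Variable R : rcfType.

Lemma span_exists N (P : 'rV[R]_N -> Prop) :
  exists k (A : 'M[R]_(k, N)), (forall i, P (row i A)) /\ (forall c, P c -> (c <= A)%MS).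
Proof.
suff H : forall d k (A : 'M[R]_(k, N)), (N - \rank A <= d)%N ->
    (forall i, P (row i A)) ->
    exists k (A : 'M[R]_(k, N)), (forall i, P (row i A)) /\ (forall c, P c -> (c <= A)%MS).
  apply: (H N 0%N 0) => [|[]//]; exact: leq_subr.
elim=> [|d IH] k A hd hA.
  exists k, A; split => // c _; apply: submx_full.
  by rewrite /row_full eqn_leq rank_leq_col /= -subn_eq0 -leqn0.
have [Hall|Hex] := classic (forall c, P c -> (c <= A)%MS).
  by exists k, A.
have [c [Pc nc]] : exists c, P c /\ ~ (c <= A)%MS.
  apply: NNPP => H; apply: Hex => c Pc; apply: NNPP => nc; apply: H; by exists c.
apply: (IH _ (col_mx A c)).
  have lt : (A < col_mx A c)%MS.
    rewrite ltmxE -addsmxE addsmxSl /=; apply/negP => H; apply: nc.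
    by apply: submx_trans H; rewrite -addsmxE addsmxSr.
  have := rank_ltmx lt; have := rank_leq_col (col_mx A c).
  move: hd; set a := \rank A; set b := \rank (col_mx A c). lia.
move=> i; have [j ->|j ->] := split_ordP i.
  by rewrite rowKu.
rewrite rowKd; suff -> : row j c = c by [].
by apply/rowP => z; rewrite mxE (ord1 j).
Qed.
End LA.
Section LA2.
Variable R : rcfType.
Lemma annih k N (M : 'M[R]_(k, N)) p (D : 'M[R]_(p, N)) :
  kermx M^T *m D^T = 0 -> (D <= M)%MS.
Proof.
set K := kermx M^T => hKD.
have trz : forall a b c (X : 'M[R]_(a, b)) (Y : 'M[R]_(c, b)), X *m Y^T = 0 -> Y *m X^T = 0.
  by move=> a b c X Y h; rewrite -[Y]trmxK -trmx_mul h trmx0.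
have hD : (D <= kermx K^T)%MS by apply/sub_kermxP; apply: trz.
have hM : (M <= kermx K^T)%MS by apply/sub_kermxP; apply: trz; exact: mulmx_ker.
have hr : \rank M = \rank (kermx K^T).
  rewrite mxrank_ker mxrank_tr mxrank_ker mxrank_tr.
  have := rank_leq_col M; set a := \rank M; lia.
have := (mxrank_leqif_eq hM).2; rewrite hr eqxx => /esym/andP [_ h].
exact: submx_trans hD h.
Qed.
End LA2.
Section Dot.
Variable R : rcfType.
Definition dot r (u v : 'rV[R]_r) := (u *m v^T) 0 0.
Lemma dotE r (u v : 'rV[R]_r) : dot u v = \sum_j u 0 j * v 0 j.
Proof. by rewrite /dot mxE; apply: eq_bigr => j _; rewrite mxE. Qed.
Lemma dotC r (u v : 'rV[R]_r) : dot u v = dot v u.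
Proof. by rewrite !dotE; apply: eq_bigr => j _; rewrite mulrC. Qed.
Lemma dot_scalar r (u v : 'rV[R]_r) : u *m v^T = (dot u v)%:M.
Proof. exact: mx11_scalar. Qed.
Lemma dotBl r (u v w : 'rV[R]_r) : dot (u - v) w = dot u w - dot v w.
Proof. by rewrite !dotE -sumrB; apply: eq_bigr => j _; rewrite !mxE mulrBl. Qed.
Lemma dotBr r (u v w : 'rV[R]_r) : dot w (u - v) = dot w u - dot w v.
Proof. by rewrite dotC dotBl !(dotC w). Qed.
Lemma dotDl r (u v w : 'rV[R]_r) : dot (u + v) w = dot u w + dot v w.
Proof. by rewrite !dotE -big_split; apply: eq_bigr => j _; rewrite !mxE mulrDl. Qed.
Lemma dotZl r a (u w : 'rV[R]_r) : dot (a *: u) w = a * dot u w.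
Proof. by rewrite !dotE mulr_sumr; apply: eq_bigr => j _; rewrite !mxE mulrA. Qed.
Lemma dot_eq0 r (u : 'rV[R]_r) : dot u u = 0 -> u = 0.
Proof.
rewrite dotE => h; apply/rowP => j; rewrite mxE.
have hp : forall i : 'I_r, xpredT i -> 0 <= u 0 i * u 0 i.
  by move=> i _; rewrite -expr2 sqr_ge0.
have := @psumr_eq0P _ _ xpredT (fun j => u 0 j * u 0 j) hp h j isT.
by move=> /eqP; rewrite mulf_eq0 orbb => /eqP.
Qed.
Lemma dotM r (O : 'M[R]_r) (u v : 'rV[R]_r) : O *m O^T = 1%:M ->
  dot (u *m O) (v *m O) = dot u v.
Proof. by move=> h; rewrite /dot trmx_mul mulmxA -(mulmxA u) h mulmx1. Qed.

Lemma ortho_ext r N (p q : 'I_N -> 'rV[R]_r) :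
  (forall i j, dot (p i) (p j) = dot (q i) (q j)) ->
  exists O : 'M[R]_r, [/\ O *m O^T = 1%:M, O^T *m O = 1%:M & forall j, p j *m O = q j].
Proof.
move=> hpq.
suff: forall k, (k <= N)%N -> exists O : 'M[R]_r,
    [/\ O *m O^T = 1%:M, O^T *m O = 1%:M & forall j : 'I_N, (j < k)%N -> p j *m O = q j].
  move/(_ N (leqnn N)) => [O [h1 h2 h3]]; exists O; split=> // j; exact: h3.
elim=> [_|k IH hk]; first by exists 1%:M; rewrite trmx1 mulmx1.
have [Om [h1 h2 h3]] := IH (ltnW hk).
pose jk : 'I_N := Ordinal hk.
pose y := p jk *m Om; pose u := y - q jk.
have dyy : dot y y = dot (q jk) (q jk) by rewrite /y dotM.
have orth : forall j : 'I_N, (j < k)%N -> dot (q j) u = 0.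
  by move=> j hj; rewrite /u dotBr -(h3 j hj) /y dotM // (h3 j hj) hpq subrr.

have [u0|un0] := eqVneq u 0.
  exists Om; split=> // j; rewrite ltnS leq_eqVlt => /orP [/eqP ej|hj]; last exact: h3 j hj.
  have -> : j = jk by apply: val_inj.
  by move/eqP: u0; rewrite subr_eq0 => /eqP.
have duu0 : dot u u != 0 by apply/eqP => /dot_eq0; apply/eqP.
pose a := 2 / dot u u.
pose H : 'M[R]_r := 1%:M - a *: (u^T *m u).
have vH : forall v, v *m H = v - (a * dot v u) *: u.
  by move=> v; rewrite mulmxBr mulmx1 -scalemxAr mulmxA dot_scalar mul_scalar_mx scalerA.
have HT : H^T = H by rewrite /H linearB /= trmx1 linearZ /= trmx_mul trmxK.
have aduu : a * dot u u = 2 by rewrite /a mulfVK.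
have wHH : forall w : 'rV_r, w *m H *m H = w.
  move=> w; rewrite vH vH dotBl dotZl.
  have -> : a * dot w u * dot u u = 2 * dot w u by rewrite mulrAC aduu.
  apply/rowP => z; rewrite !mxE; ring.
have HH : H *m H = 1%:M.
  apply/row_matrixP => i; rewrite row_mul.
  have -> : row i H = row i 1%:M *m H by rewrite -row_mul mul1mx.
  by rewrite wHH.
exists (Om *m H); split.
- by rewrite trmx_mul HT mulmxA -(mulmxA Om) HH mulmx1 h1.
- by rewrite trmx_mul HT mulmxA -(mulmxA H) h2 mulmx1 HH.
- move=> j; rewrite ltnS leq_eqVlt => /orP [/eqP ej|hj].
    have -> : j = jk by apply: val_inj.
    rewrite mulmxA -/y vH.
    have : dot u u = 2 * dot y u.
      rewrite /u dotBl !dotBr dyy (dotC (q jk) y); ring.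
    move=> e; have -> : a * dot y u = 1.
      have dyu0 : dot y u != 0 by move: duu0; rewrite e mulf_eq0 negb_or => /andP [].
      by rewrite /a e; field.
    by rewrite scale1r /u opprB addrC subrK.
  by rewrite mulmxA h3 // vH orth // mulr0 scale0r subr0.
Qed.
End Dot.
Section Main.
Variable R : rcfType.
Variable n : nat.
Local Notation N := n.+1.
Local Notation S := (mpoly R N).

Definition fr (c : 'rV[R]_N) : nat -> R := fun j => c 0 (inord j).
Definition linr (c : 'rV[R]_N) : S := lin N (fr c).
Definition evr (x : 'rV[R]_N) := ev N (fr x).
Definition coordr (l : S) : 'rV[R]_N :=
  \row_(j < N) ev N (fun t => (t == j)%:R) l.

Lemma lin_ext m (c d : nat -> R) : (forall j, (j < m)%N -> c j = d j) -> lin m c = lin m d.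
Proof. by move=> h; apply: eq_bigr => j _; rewrite h. Qed.

Lemma ev_linr x c : evr x (linr c) = dot c x.
Proof.
by rewrite /evr /linr ev_lin dotE; apply: eq_bigr => j _; rewrite /fr inord_val.
Qed.

Lemma homog1_linr (l : S) : homog 1 l -> l = linr (coordr l).
Proof.
move=> /homog1_lin [c ->]; apply: lin_ext => t ht.
rewrite /fr mxE ev_lin (bigD1 (inord t)) //= inordK // eqxx mulr1 big1 ?addr0 //.
move=> s hs; suff -> : (s == t :> nat) = false by rewrite mulr0.
by apply/negbTE; apply: contra hs => /eqP e; apply/eqP/val_inj; rewrite /= inordK.
Qed.

Lemma linrD c d : linr (c + d) = linr c + linr d.
Proof. rewrite /linr -lin_add; apply: lin_ext => j _; by rewrite /fr mxE. Qed.
Lemma linrN c : linr (- c) = - linr c.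
Proof. rewrite /linr -lin_opp; apply: lin_ext => j _; by rewrite /fr mxE. Qed.
Lemma linrB c d : linr (c - d) = linr c - linr d.
Proof. by rewrite linrD linrN. Qed.
Lemma linrZ a c : linr (a *: c) = @cst R N a * linr c.
Proof. rewrite /linr -lin_scale; apply: lin_ext => j _; by rewrite /fr mxE. Qed.
Lemma linr_sum p (f : 'I_p -> 'rV[R]_N) : linr (\sum_(i < p) f i) = \sum_(i < p) linr (f i).
Proof. rewrite /linr -lin_sum; apply: lin_ext => j _; by rewrite /fr summxE. Qed.
Lemma linr_mul p (w : 'rV[R]_p) (A : 'M[R]_(p, N)) :
  linr (w *m A) = \sum_(i < p) @cst R N (w 0 i) * linr (row i A).
Proof. by rewrite mulmx_sum_row linr_sum; apply: eq_bigr => i _; rewrite linrZ. Qed.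

Lemma rowB m k (A B : 'M[R]_(m, k)) i : row i (A - B) = row i A - row i B.
Proof. by apply/rowP => z; rewrite !mxE. Qed.
Lemma rowD m k (A B : 'M[R]_(m, k)) i : row i (A + B) = row i A + row i B.
Proof. by apply/rowP => z; rewrite !mxE. Qed.

Lemma I_sum (I : S -> Prop) p (f : 'I_p -> S) :
  is_ideal I -> (forall i, I (f i)) -> I (\sum_(i < p) f i).
Proof.
move=> [I0 ID IM] h; elim/big_rec: _ => // i x _ hx; exact: ID.
Qed.
Lemma I_opp (I : S -> Prop) a : is_ideal I -> I a -> I (- a).
Proof. by move=> [I0 ID IM] h; rewrite -mulN1r; apply: IM. Qed.

Lemma dot_row_tr m (x : 'rV[R]_N) (A : 'M[R]_(m, N)) i :
  (x *m A^T) 0 i = dot (row i A) x.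
Proof. by rewrite dotE mxE; apply: eq_bigr => j _; rewrite !mxE mulrC. Qed.

Lemma evr_sumsq m (x : 'rV[R]_N) (A : 'M[R]_(m, N)) :
  evr x (\sum_(i < m) linr (row i A) ^+ 2) = dot (x *m A^T) (x *m A^T).
Proof.
rewrite rmorph_sum dotE; apply: eq_bigr => i _.
by rewrite rmorphXn ev_linr dot_row_tr expr2.
Qed.
End Main.
Section Main2.
Variable R : rcfType.
Variable n : nat.
Local Notation N := n.+1.
Local Notation S := (mpoly R N).

Lemma dotDr r (u v w : 'rV[R]_r) : dot w (u + v) = dot w u + dot w v.
Proof. by rewrite dotC dotDl !(dotC w). Qed.
Lemma dot0r r (u : 'rV[R]_r) : dot u 0 = 0.
Proof. by rewrite dotE big1 // => j _; rewrite mxE mulr0. Qed.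

Lemma main_lemma r (IX IY : S -> Prop) (hX : is_ideal IX) (hY : is_ideal IY)
  (hcap : forall f, saturation (ideal_sum IX IY) f -> saturation (span_cap_ideal IX IY) f)
  (q : S) (hfX : sos_linear_mod IX r q) (hfY : sos_linear_mod IY r q) :
  sos_linear_mod (fun g => IX g /\ IY g) r q.
Proof.
have [I0X IDX IMX] := hX; have [I0Y IDY IMY] := hY.
case: hfX => l [hl hIl]; case: hfY => m [hm hIm].
pose Lam : 'M[R]_(r, N) := \matrix_(i < r) coordr (l i).
pose Mu : 'M[R]_(r, N) := \matrix_(i < r) coordr (m i).
have hlL : forall i, l i = linr (row i Lam) by move=> i; rewrite rowK; exact: homog1_linr.
have hmM : forall i, m i = linr (row i Mu) by move=> i; rewrite rowK; exact: homog1_linr.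
have [kX [AX [AXr AXs]]] := span_exists (fun c : 'rV[R]_N => IX (linr c)).
have [kY [AY [AYr AYs]]] := span_exists (fun c : 'rV[R]_N => IY (linr c)).
have subX : forall c, (c <= AX)%MS -> IX (linr c).
  by move=> c /submxP [w ->]; rewrite linr_mul; apply: I_sum => // i; exact: IMX.
have subY : forall c, (c <= AY)%MS -> IY (linr c).
  by move=> c /submxP [w ->]; rewrite linr_mul; apply: I_sum => // i; exact: IMY.
pose Mc := col_mx AX AY.
pose Ker := kermx Mc^T.
have vanish : forall x, x *m Mc^T = 0 -> forall c, IX (linr c) \/ IY (linr c) -> dot c x = 0.
  move=> x hx c.
  have [hxX hxY] : x *m AX^T = 0 /\ x *m AY^T = 0.
    move: hx; rewrite /Mc tr_col_mx mul_mx_row => /eqP; rewrite row_mx_eq0.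
    by case/andP => /eqP -> /eqP ->.
  case=> [/AXs|/AYs] /submxP [w ->]; rewrite /dot -mulmxA.
    have -> : AX *m x^T = 0 by rewrite -[AX]trmxK -trmx_mul hxX trmx0.
    by rewrite mulmx0 mxE.
  have -> : AY *m x^T = 0 by rewrite -[AY]trmxK -trmx_mul hxY trmx0.
  by rewrite mulmx0 mxE.
have key : forall x, x *m Mc^T = 0 ->
    dot (x *m Lam^T) (x *m Lam^T) = dot (x *m Mu^T) (x *m Mu^T).
  move=> x hx.
  pose q' := \sum_(i < r) m i ^+ 2 - \sum_(i < r) l i ^+ 2.
  have sat0 : saturation (ideal_sum IX IY) q'.
    exists 0%N => g _; exists (g * (q - \sum_(i < r) l i ^+ 2)), (- g * (q - \sum_(i < r) m i ^+ 2)); split.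
    - exact: IMX.
    - exact: IMY.
    - rewrite /q'; ring.
  have [k hk] := hcap _ sat0.
  have evq : evr x q' = 0.
    have [x0|xn0] := eqVneq x 0.
      rewrite /q' rmorphB !rmorph_sum big1 ?big1 ?subr0 // => i _;
        by rewrite rmorphXn ?hlL ?hmM ev_linr x0 dot0r expr2 mulr0.
    have [j hj] : exists j, x 0 j != 0.
      apply: NNPP => H; move/eqP: xn0; apply; apply/rowP => j; rewrite mxE.
      apply/eqP; apply: NNPP => hj; apply: H; exists j; exact/negP.
    have [t [a [b [hb e]]]] := hk (@xv R N j ^+ k) (homog_xpow _ _ (ltn_ord j)).
    have : evr x (@xv R N j ^+ k * q') = 0.
      rewrite e rmorph_sum big1 // => s _; rewrite rmorphM.
      have [hbs hbh] := hb s.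
      rewrite (homog1_linr hbh) ev_linr vanish ?mulr0 //.
      by rewrite -(homog1_linr hbh).
    rewrite rmorphM rmorphXn /evr ev_xv // /fr inord_val => /eqP.
    by rewrite mulf_eq0 expf_eq0 (negbTE hj) andbF /= => /eqP.
  move: evq; rewrite /q' rmorphB.
  have -> : \sum_(i < r) m i ^+ 2 = \sum_(i < r) linr (row i Mu) ^+ 2.
    by apply: eq_bigr => i _; rewrite -hmM.
  have -> : \sum_(i < r) l i ^+ 2 = \sum_(i < r) linr (row i Lam) ^+ 2.
    by apply: eq_bigr => i _; rewrite -hlL.
  by rewrite !evr_sumsq => /eqP; rewrite subr_eq0 => /eqP ->.
have Krow : forall j, row j Ker *m Mc^T = 0.
  by move=> j; rewrite -row_mul mulmx_ker row0.
pose p := fun j : 'I_N => row j Ker *m Lam^T.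
pose qv := fun j : 'I_N => row j Ker *m Mu^T.
have hpq : forall i j, dot (p i) (p j) = dot (qv i) (qv j).
  move=> i j.
  have e1 := key _ (Krow i); have e2 := key _ (Krow j).
  have hs : (row i Ker + row j Ker) *m Mc^T = 0 by rewrite mulmxDl !Krow addr0.
  have e3 := key _ hs.
  move: e3; rewrite !mulmxDl !dotDl !dotDr -/(p i) -/(p j) -/(qv i) -/(qv j).
  move: e1 e2; rewrite -/(p i) -/(p j) -/(qv i) -/(qv j).
  rewrite (dotC (p j) (p i)) (dotC (qv j) (qv i)) => e1 e2 e3.
  lra.
have [O [hO1 hO2 hOpq]] := ortho_ext hpq.
have hKO : Ker *m Lam^T *m O = Ker *m Mu^T.
  by apply/row_matrixP => j; have := hOpq j; rewrite /p /qv -!row_mul.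
pose Mp := O *m Mu.
pose D := Lam - Mp.
have hKD : Ker *m D^T = 0.
  rewrite /D linearB /= mulmxBr /Mp trmx_mul mulmxA -hKO -!mulmxA hO1 mulmx1.
  exact: subrr.
have [W hW] := submxP (annih hKD).
pose W1 := lsubmx W *m AX.
pose W2 := rsubmx W *m AY.
have hD : D = W1 + W2 by rewrite hW /Mc -{1}[W]hsubmxK mul_row_col.
pose h := fun i => linr (row i (Lam - W1)).
exists h; split.
  by move=> i; exact: lin_homog.
split.
  have ha : forall i, IX (linr (row i W1)) by move=> i; apply: subX; rewrite row_mul submxMl.
  have hh : forall i, h i = l i - linr (row i W1) by move=> i; rewrite /h rowB linrB -hlL.
  have -> : \sum_(i < r) h i ^+ 2 =
      \sum_(i < r) (l i ^+ 2 - (l i + l i - linr (row i W1)) * linr (row i W1)).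
    by apply: eq_bigr => i _; rewrite hh; ring.
  rewrite sumrB.
  have -> : forall a b c : S, a - (b - c) = (a - b) + c by move=> a b c; ring.
  by apply: IDX => //; apply: I_sum => // i; apply: IMX; exact: ha.
have hb : forall i, IY (linr (row i W2)) by move=> i; apply: subY; rewrite row_mul submxMl.
have eLW : Lam - W1 = Mp + W2.
  have -> : Lam = D + Mp by rewrite /D subrK.
  by rewrite hD addrC !addrA addNr add0r addrC.
have hh : forall i, h i = linr (row i Mp) + linr (row i W2).
  by move=> i; rewrite /h eLW rowD linrD.
have hMp : forall i, linr (row i Mp) = \sum_(k < r) @cst R N (O i k) * m k.
  by move=> i; rewrite row_mul linr_mul; apply: eq_bigr => k _; rewrite -hmM mxE.
have hsq : \sum_(i < r) linr (row i Mp) ^+ 2 = \sum_(i < r) m i ^+ 2.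
  rewrite (eq_bigr _ (fun i _ => congr1 (fun z => z ^+ 2) (hMp i))).
  pose c := fun i k => @cst R N (O i k).
  have E : forall i, (\sum_(k < r) c i k * m k) ^+ 2 =
      \sum_(k < r) \sum_(k' < r) c i k * c i k' * (m k * m k').
    move=> i; rewrite expr2 mulr_suml; apply: eq_bigr => k _.
    by rewrite mulr_sumr; apply: eq_bigr => k' _; ring.
  rewrite (eq_bigr _ (fun i _ => E i)) exchange_big /=; apply: eq_bigr => k _.
  rewrite exchange_big /=.
  have -> : \sum_(k' < r) \sum_(i < r) c i k * c i k' * (m k * m k') =
      \sum_(k' < r) @cst R N ((O^T *m O) k k') * (m k * m k').
    apply: eq_bigr => k' _; rewrite -mulr_suml mxE rmorph_sum; congr (_ * _).
    by apply: eq_bigr => i _; rewrite mxE rmorphM.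
  rewrite hO2 (bigD1 k) //= mxE eqxx big1 ?addr0.
    by rewrite rmorph1 mul1r expr2.
  by move=> k' hk'; rewrite mxE eq_sym (negbTE hk') rmorph0 mul0r.
have -> : \sum_(i < r) h i ^+ 2 = \sum_(i < r) (linr (row i Mp) ^+ 2 +
    (linr (row i Mp) + linr (row i Mp) + linr (row i W2)) * linr (row i W2)).
  by apply: eq_bigr => i _; rewrite hh; ring.
rewrite big_split /= hsq.
have -> : forall a b c : S, a - (b + c) = (a - b) + - c by move=> a b c; ring.
apply: IDY => //; apply: I_opp => //; apply: I_sum => // i; apply: IMY; exact: hb.
Qed.
End Main2.

Theorem theorem5p2 (R : rcfType) (n r : nat) (IX IY : mpoly R n.+1 -> Prop)
    (hX : is_scheme_ideal IX) (hY : is_scheme_ideal IY)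
    (hcap : forall f, saturation (ideal_sum IX IY) f <->
                      saturation (span_cap_ideal IX IY) f)
    (q : mpoly R n.+1) (hq : homog 2 q)
    (hfX : sos_linear_mod IX r q) (hfY : sos_linear_mod IY r q) :
  sos_linear_mod (fun g => IX g /\ IY g) r q.
Proof.
apply: main_lemma => //.
- by case: hX => [[]].
- by case: hY => [[]].
- by move=> f; case: (hcap f).
Qed.
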